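(* Suppose that $\|\tilde{\mu}_{m}-\mu\|_\infty=\mathcal{O}_{\mathrm{P}}(a_m)$ and $\|\tilde{\pi}_{m}-\pi\|_\infty=\mathcal{O}_{\mathrm{P}}(a_m)$ for sufficiently large $m$, where $\{a_m\}$ is a deterministic sequence with $a_m\to 0$. Suppose in addition that, for sufficiently large $m$ and conditionally on the fitted function $\tilde{\mu}_{m}(\cdot)$, the joint density $b_m(x,u)$ of $(\mu(Z),\eta_m(Z))$, where $\eta_m=a_m^{-1}(\tilde{\mu}_{m}-\mu)$, and its partial derivatives $\partial_x b_m(x,u)$, $\partial_x^2 b_m(x,u)$ exist for all $x,u$ and there are non-negative functions $\bar b_{m,i}(u)$, $i=0,1,2$, with $b_m(x,u)\le \bar b_{m,0}(u)$, $|\partial_x b_m(x,u)|\le \bar b_{m,1}(u)$, $|\partial_x^2 b_m(x,u)|\le \bar b_{m,2}(u)$ for all $x,u$ and $\sup_m\int_{\mathbb{R}}|u|^r\bar b_{m,i}(u)\,du<\infty$ for $r=0,1,2,3$ and $i=0,1,2$. Suppose also that $f_\mu(q)>0$. Then $\tilde{q}_{m}-q=\mathcal{O}_{\mathrm{P}}(a_m)$.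
   Context: $Z$ denotes the risk factors, $\mu(z)=\mathrm{E}[X\mid Z=z]$ and $\pi(z)=\mathrm{E}[Y\mid Z=z]$ are portfolio loss functions, and $\tilde{\mu}_{m},\tilde{\pi}_{m}$ are approximations of them fitted in a first stage from $m$ outer-level scenarios (each with inner-level observations). $\|\cdot\|_\infty$ is the essential supremum norm over the domain of $Z$ w.r.t. its distribution. $q$ is the $\alpha$-VaR of $\mu(Z)$, i.e. $\Pr\{\mu(Z)\le q\}=\alpha$, and $\tilde{q}_{m}$ is the $\alpha$-VaR of $\tilde{\mu}_{m}(Z)$ conditionally on the fitted functions, i.e. $\mathrm{Pr}_m\{\tilde{\mu}_{m}(Z)\le \tilde{q}_{m}\}=\alpha$, where $\mathrm{Pr}_m$ is probability conditional on $\tilde{\mu}_{m},\tilde{\pi}_{m}$. $f_\mu$ is the density of $\mu(Z)$. *)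

(* Defs.v *)
From HB Require Import structures.
From mathcomp Require Import all_boot all_order all_algebra.
From mathcomp Require Import all_classical all_reals all_analysis ess_sup_inf.
Set Implicit Arguments. Unset Strict Implicit. Unset Printing Implicit Defensive.
Import Order.TTheory GRing.Theory Num.Theory.
Import numFieldNormedType.Exports.
Local Open Scope classical_set_scope.
Local Open Scope ring_scope.

(* Stochastic boundedness X_m = O_P(a_m) for a sequence of (extended-real)
   random quantities X m : Omega -> \bar R on the probability space P:
   for every eps > 0 there are M and N such that for all m >= N the event
   {X m <= M a_m} has probability at least 1 - eps (stated with a measurable
   sub-event, i.e. via inner probability, so no measurability of X m is
   presupposed; for measurable X m this is the usual definition). *)
Definition boundedP {R : realType} {d : measure_display} {Omega : measurableType d}
  (P : probability Omega R) (X : nat -> Omega -> \bar R) (a : nat -> R) : Prop :=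
  forall eps : R, 0 < eps ->
  exists M : R, exists N : nat, forall m : nat, (N <= m)%N ->
    exists A : set Omega, measurable A /\ (P A >= (1 - eps)%:E)%E /\
      forall w, A w -> (X m w <= (M * a m)%:E)%E.

Definition sup_norm {R : realType} {d : measure_display} {T : measurableType d}
  (PZ : probability T R) (f : T -> R) : \bar R :=
  ess_sup PZ (fun z => (`|f z|)%:E).

Definition is_joint_density {R : realType} {d : measure_display} {T : measurableType d}
  (PZ : probability T R) (g1 g2 : T -> R) (b : R -> R -> R) : Prop :=
  measurable_fun [set: R * R] (fun p : R * R => b p.1 p.2) /\
  (forall x u, 0 <= b x u) /\
  forall A : set (R * R), measurable A ->
    PZ [set z | A (g1 z, g2 z)] =
    (\int[(@lebesgue_measure R) \x (@lebesgue_measure R)]_(p in A) (b p.1 p.2)%:E)%E.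

Definition is_density {R : realType} {d : measure_display} {T : measurableType d}
  (PZ : probability T R) (g : T -> R) (f : R -> R) : Prop :=
  measurable_fun [set: R] f /\ (forall x, 0 <= f x) /\
  forall A : set R, measurable A ->
    PZ [set z | A (g z)] = (\int[@lebesgue_measure R]_(x in A) (f x)%:E)%E.

(* Main.v *)
Require Import Defs.
From HB Require Import structures.
From mathcomp Require Import all_boot all_order all_algebra.
From mathcomp Require Import all_classical all_reals all_analysis ess_sup_inf.
From mathcomp Require Import lra.
Import Order.TTheory GRing.Theory Num.Theory.
Import numFieldNormedType.Exports.
Local Open Scope classical_set_scope.
Local Open Scope ring_scope.

Lemma int_pos (R : realType) (f : R -> R) (q x y : R) :
  measurable_fun [set: R] f -> (forall z, 0 <= f z) ->
  {for q, continuous f} -> 0 < f q -> x < y -> x <= q -> q <= y ->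
  (0 < \int[@lebesgue_measure R]_(z in [set` `]x, y]]) (f z)%:E)%E.
Proof.
move=> mf f0 cf fq xy xq qy.
have /cvgrPdist_lt /(_ (f q / 2)) : f @ q --> f q by [].
move=> /(_ ltac:(by rewrite divr_gt0)) /nbhs_ballP [r /= r0 H].
have r20 : 0 < r / 2 by rewrite divr_gt0.
have [u [v [uv [xu [vy sub]]]]] : exists u v, u < v /\ x <= u /\ v <= y /\
   (forall z, u < z -> z <= v -> `|q - z| < r).
  have [h1|h1] := leP x (q - r/2); have [h2|h2] := leP y (q + r/2).
  - exists (q - r/2), y; refine (conj _ (conj _ (conj _ _))); [lra|lra|lra|].
    move=> z z1 z2; rewrite ltr_norml; apply/andP; split; lra.
  - exists (q - r/2), (q + r/2); refine (conj _ (conj _ (conj _ _))); [lra|lra|lra|].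
    move=> z z1 z2; rewrite ltr_norml; apply/andP; split; lra.
  - exists x, y; refine (conj _ (conj _ (conj _ _))); [lra|lra|lra|].
    move=> z z1 z2; rewrite ltr_norml; apply/andP; split; lra.
  - exists x, (q + r/2); refine (conj _ (conj _ (conj _ _))); [lra|lra|lra|].
    move=> z z1 z2; rewrite ltr_norml; apply/andP; split; lra.
apply: (@lt_le_trans _ _ (\int[@lebesgue_measure R]_(z in [set` `]u, v]]) (f q / 2)%:E)%E).
  rewrite integral_cst //= lebesgue_measure_itv /= lte_fin uv -EFinB -EFinM lte_fin.
  by apply: mulr_gt0; [rewrite divr_gt0 | rewrite subr_gt0].
apply: (@le_trans _ _ (\int[@lebesgue_measure R]_(z in [set` `]u, v]]) (f z)%:E)%E).
  apply: ge0_le_integral => //.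
  - by move=> z _; rewrite lee_fin ltW // divr_gt0.
  - apply/measurable_realfun.measurable_EFinP; exact: measurable_funS (subsetT _) mf.
  - move=> z /= /[dup] zi; rewrite in_itv /= => /andP[z1 z2]; rewrite lee_fin.
    have := H z; rewrite /ball /= => /(_ (sub z z1 z2)).
    rewrite ltr_norml => /andP[h1 h2]; lra.
apply: ge0_subset_integral => //.
- apply/measurable_realfun.measurable_EFinP; exact: measurable_funS (subsetT _) mf.
- by move=> z _; rewrite lee_fin.
- move=> z /=; rewrite !in_itv /= => /andP[uz zv]; apply/andP; split.
    exact: le_lt_trans uz.
  exact: le_trans vy.
Qed.

Lemma mset_le (R : realType) d (T : measurableType d) (g : T -> R) (x : R) :
  measurable_fun [set: T] g -> measurable [set z | g z <= x].
Proof.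
move=> mg; have := mg measurableT _ (measurable_itv `]-oo, x]).
rewrite setTI; congr measurable; apply/seteqP; split => z /=;
  by rewrite in_itv /=.
Qed.

Lemma cdf_lt (R : realType) d (T : measurableType d) (PZ : probability T R)
  (mu : T -> R) (fmu : R -> R) (q x y : R) :
  measurable_fun [set: T] mu -> is_density PZ mu fmu ->
  {for q, continuous fmu} -> 0 < fmu q -> x < y -> x <= q -> q <= y ->
  (PZ [set z | (mu z <= x)%R] < PZ [set z | (mu z <= y)%R])%E.
Proof.
move=> mmu [mf [f0 dens]] cf fq xy xq qy.
have mxy : measurable [set z | mu z \in `]x, y]].
  have := mmu measurableT _ (measurable_itv `]x, y]); rewrite setTI; exact.
have -> : [set z | mu z <= y] = [set z | mu z <= x] `|` [set z | mu z \in `]x, y]].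
  apply/seteqP; split => z /=; rewrite in_itv /=.
    by move=> zy; case: (leP (mu z) x) => h; [left|right; apply/andP].
  by case=> [zx|/andP[_ ->]] //; apply: le_trans zx (ltW xy).
rewrite measureU //; last 2 first.
- exact: mset_le.
- by apply/seteqP; split => z //= [zx]; rewrite in_itv /= => /andP[h _]; lra.
rewrite lteDl; last by rewrite ge0_fin_numE ?measure_ge0 // (le_lt_trans (probability_le1 _ _)) ?ltry //; exact: mset_le.
have := dens _ (measurable_itv `]x, y]); rewrite /= => ->.
exact: (@int_pos _ fmu q x y mf f0 cf fq xy xq qy).
Qed.

Lemma key (R : realType) d (T : measurableType d) (PZ : probability T R)
  (g mu : T -> R) (delta q qt alpha : R) :
  measurable_fun [set: T] g -> measurable_fun [set: T] mu ->
  (ess_sup PZ (fun z => (`|g z - mu z|)%:E) <= delta%:E)%E ->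
  PZ [set z | (mu z <= q)%R] = alpha%:E ->
  PZ [set z | (g z <= qt)%R] = alpha%:E ->
  (forall x y, x < y -> x <= q -> q <= y ->
     (PZ [set z | (mu z <= x)%R] < PZ [set z | (mu z <= y)%R])%E) ->
  `|qt - q| <= delta.
Proof.
move=> mg mmu /ess_supP [B [mB PB0 sB]] Hq Hqt Hlt.
have drop : forall S, measurable S -> PZ S = PZ (S `\` B).
  move=> S mS; rewrite (measureDI PZ mS mB).
  rewrite (subset_measure0 (measurableI _ _ mS mB) mB (@subIsetr _ S B) PB0).
  by rewrite adde0.
have good : forall z, ~ B z -> `|g z - mu z| <= delta.
  move=> z nB; apply/negPn/negP => h; apply: nB; apply: sB => /=.
  by rewrite lee_fin; apply/negP.
rewrite leNgt; apply/negP; rewrite ltr_normr => /orP[h|h].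
- have := Hlt q (qt - delta) ltac:(lra) (lexx q) ltac:(lra).
  rewrite Hq drop; last exact: mset_le.
  apply/negP; rewrite -leNgt -Hqt; apply: le_measure; rewrite ?inE.
  + by apply: measurableD => //; exact: mset_le.
  + exact: mset_le.
  + move=> z /= [zs nB]; have := good z nB; rewrite ler_norml => /andP[h1 h2]; lra.
- have := Hlt (qt + delta) q ltac:(lra) ltac:(lra) (lexx q).
  rewrite Hq; apply/negP; rewrite -leNgt -Hqt drop; last exact: mset_le.
  apply: le_measure; rewrite ?inE.
  + by apply: measurableD => //; exact: mset_le.
  + exact: mset_le.
  + move=> z /= [zs nB]; have := good z nB; rewrite ler_norml => /andP[h1 h2]; lra.
Qed.

Theorem proposition2
  (R : realType)
  (dO : measure_display) (Omega : measurableType dO) (P : probability Omega R)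
  (dT : measure_display) (T : measurableType dT) (PZ : probability T R)
  (mu pi : T -> R)
  (mut pit : nat -> Omega -> T -> R)
  (a : nat -> R)
  (alpha q : R) (qt : nat -> Omega -> R)
  (fmu : R -> R)
  (b : nat -> Omega -> R -> R -> R)
  (bbar : nat -> 'I_3 -> R -> R) :
  0 < alpha < 1 ->
  measurable_fun [set: T] mu ->
  measurable_fun [set: T] pi ->
  (forall m w, measurable_fun [set: T] (mut m w)) ->
  (forall m w, measurable_fun [set: T] (pit m w)) ->
  a @ \oo --> 0 ->
  (* alpha-VaR of mu(Z) and of mut_m(Z) (conditionally on the first stage) *)
  PZ [set z | mu z <= q] = alpha%:E ->
  (forall m w, PZ [set z | mut m w z <= qt m w] = alpha%:E) ->
  (* uniform approximation rates *)
  boundedP P (fun m w => sup_norm PZ (fun z => mut m w z - mu z)) a ->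
  boundedP P (fun m w => sup_norm PZ (fun z => pit m w z - pi z)) a ->
  (* density assumptions, for sufficiently large m *)
  (exists N : nat, forall m : nat, (N <= m)%N ->
     0 < a m /\
     (forall w, is_joint_density PZ mu
                  (fun z => (a m)^-1 * (mut m w z - mu z)) (b m w)) /\
     (forall w x u,
        derivable (fun y => b m w y u) x 1 /\
        derivable (derive1 (fun y => b m w y u)) x 1) /\
     (forall w x u,
        b m w x u <= bbar m ord0 u /\
        `|derive1 (fun y => b m w y u) x| <= bbar m (inord 1) u /\
        `|derive1 (derive1 (fun y => b m w y u)) x| <= bbar m (inord 2) u)) ->
  (forall m i u, 0 <= bbar m i u) ->
  (exists C : R, exists N : nat, forall m : nat, (N <= m)%N ->
     forall (i : 'I_3) (r : nat), (r <= 3)%N ->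
       (\int[@lebesgue_measure R]_(u in [set: R]) ((`|u| ^+ r * bbar m i u)%:E)
          <= C%:E)%E) ->
  (* density of mu(Z), positive at q *)
  is_density PZ mu fmu ->
  {for q, continuous fmu} ->
  0 < fmu q ->
  boundedP P (fun m w => (`|qt m w - q|)%:E) a.
Proof.
move=> _ mmu _ mmut _ _ Hq Hqt Hbd _ _ _ _ dens cf fq eps e0.
have [M [N HN]] := Hbd eps e0.
exists M, N => m mN.
have [A [mA [PA HA]]] := HN m mN.
exists A; split => //; split => // w Aw.
rewrite lee_fin.
apply: (@key R dT T PZ (mut m w) mu (M * a m) q (qt m w) alpha) => //.
- exact: HA.
- by move=> x y xy xq qy; exact: (@cdf_lt R dT T PZ mu fmu q x y mmu dens cf fq xy xq qy).
Qed.
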